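(* Let $\Gamma$ be a complete dominance graph on vertex set $\{1,\dots,n\}$ and let $L=D-A$ be its graph Laplacian. Let $V$ be the $n\times n$ matrix whose $i$th column is $\mathbf{v}_i=\sum_{k=1}^{i}\mathbf{e}_k$ (with $\mathbf{e}_k$ the standard basis vectors of $\mathbb{R}^n$). Then $V^{-1}$ is the upper bidiagonal matrix with all diagonal entries equal to $1$, all superdiagonal entries equal to $-1$, and all other entries $0$. Moreover, there exists a permutation matrix $P$ such that, for each $i=1,\dots,n$, the $i$th row of $V^{-1}$ is a left eigenvector of $P^TLP$ for the eigenvalue $n-i$.
   Context: For a weighted digraph with weights $w_{ij}\ge 0$, $d^{+}(i)=\sum_j w_{ij}$, $D=\mathrm{diag}(d^{+}(1),\dots,d^{+}(n))$, $A=[w_{ij}]$, $L=D-A$. A complete dominance graph is an acyclic tournament (for each pair of distinct vertices exactly one of $(i,j),(j,i)$ is an edge) in which every edge has weight $1$. A left eigenvector $\mathbf{w}$ of a matrix $M$ for eigenvalue $\lambda$ is a nonzero vector with $\mathbf{w}^{*}M=\lambda\mathbf{w}^{*}$. *)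

(* Defs.v *)
From mathcomp Require Import all_boot all_order all_fingroup all_algebra.
Set Implicit Arguments. Unset Strict Implicit. Unset Printing Implicit Defensive.
Import GRing.Theory Num.Theory.
Local Open Scope ring_scope.

(* Vertices {1,...,n} are represented by 'I_n = {0,...,n-1}. A digraph is an
   edge relation E : rel 'I_n; (i,j) is an edge iff E i j. *)

Definition is_tournament (n : nat) (E : rel 'I_n) : Prop :=
  (forall i, ~~ E i i) /\
  (forall i j, i != j -> (E i j && ~~ E j i) || (E j i && ~~ E i j)).

Definition is_acyclic (n : nat) (E : rel 'I_n) : Prop :=
  ~ (exists (x : 'I_n) (p : seq 'I_n), [&& (size p > 0)%N, path E x p & last x p == x]).

Definition complete_dominance (n : nat) (E : rel 'I_n) : Prop :=
  is_tournament E /\ is_acyclic E.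

Definition adj_mx (R : nzRingType) (n : nat) (E : rel 'I_n) : 'M[R]_n :=
  \matrix_(i, j) (E i j)%:R.

Definition outdeg_mx (R : nzRingType) (n : nat) (E : rel 'I_n) : 'M[R]_n :=
  diag_mx (\row_i \sum_j adj_mx R E i j).

Definition laplacian (R : nzRingType) (n : nat) (E : rel 'I_n) : 'M[R]_n :=
  outdeg_mx R E - adj_mx R E.

Definition Vmx (R : nzRingType) (n : nat) : 'M[R]_n :=
  \matrix_(k, i) (k <= i)%N%:R.

Definition bidiag_mx (R : nzRingType) (n : nat) : 'M[R]_n :=
  \matrix_(i, j) ((i == j :> nat)%:R - (i.+1 == j :> nat)%:R).

(* Main.v *)
Require Import Defs.
From mathcomp Require Import all_boot all_order all_fingroup all_algebra.
From mathcomp Require Import zify.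
Import GRing.Theory Num.Theory.
Local Open Scope ring_scope.

Section H.
Variable R : realFieldType.

Lemma sum_delta n (F : 'I_n -> R) (k0 : 'I_n) :
  \sum_(k < n) (k0 == k :> nat)%:R * F k = F k0.
Proof.
rewrite (bigD1 k0) //= eqxx mul1r big1 ?addr0 // => k Hk.
rewrite (_ : (k0 == k :> nat) = false) ?mul0r //; apply/negbTE; rewrite eq_sym; exact: Hk.
Qed.

Lemma sum_delta_out n (F : 'I_n -> R) (m : nat) : (n <= m)%N ->
  \sum_(k < n) (m == k :> nat)%:R * F k = 0.
Proof.
move=> Hm; rewrite big1 // => k _.
have : (k < m)%N by apply: leq_trans (ltn_ord k) Hm.
by rewrite ltn_neqAle eq_sym => /andP[/negbTE -> _]; rewrite mul0r.
Qed.

Lemma bidiag_mul n (M : 'M[R]_n) (i j : 'I_n) :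
  (row i (bidiag_mx R n) *m M) 0 j =
  M i j - \sum_(k < n) (i.+1 == k :> nat)%:R * M k j.
Proof.
rewrite mxE.
under eq_bigr do rewrite !mxE mulrBl.
by rewrite sumrB sum_delta.
Qed.

Lemma sum_lt n (a : nat) : \sum_(b < n) (a < b)%N%:R = (n - a.+1)%N%:R :> R.
Proof.
rewrite -(big_mkord xpredT (fun b => (a < b)%N%:R)).
elim: n => [|n IH]; first by rewrite big_geq.
rewrite big_nat_recr //= IH -natrD; congr (_%:R).
case: (ltnP a n) => H; rewrite ?addn1 ?addn0; lia.
Qed.

End H.

Lemma cd_trans n (E : rel 'I_n) u v w :
  complete_dominance E -> E u v -> E v w -> E u w.
Proof.
move=> [[Hirr Htour] Hac] Huv Hvw.
have Huw : u != w.
  apply/eqP => Heq; subst w; apply: Hac; exists u, [:: v; u].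
  by rewrite /= Huv Hvw eqxx.
move: (Htour _ _ Huw) => /orP[/andP[-> _] // | /andP[Hwu _]].
exfalso; apply: Hac; exists u, [:: v; w; u].
by rewrite /= Huv Hvw Hwu eqxx.
Qed.

From mathcomp Require Import lra.
Lemma bidiag_case (R : realFieldType) n (M : 'M[R]_n) (i j : 'I_n) (P : R -> Prop) :
  (forall h : (i.+1 < n)%N, P (M i j - M (Ordinal h) j)) ->
  ((n <= i.+1)%N -> P (M i j)) -> P ((row i (bidiag_mx R n) *m M) 0 j).
Proof.
move=> H1 H2; rewrite bidiag_mul; case: (ltnP i.+1 n) => h.
  have -> : \sum_(k < n) (i.+1 == k :> nat)%:R * M k j = M (Ordinal h) j
    := @sum_delta R n (fun k => M k j) (Ordinal h).
  exact: H1.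
by rewrite sum_delta_out // subr0; apply: H2.
Qed.

Theorem proposition3p3 (R : realFieldType) (n : nat) (E : rel 'I_n) :
  complete_dominance E ->
  Vmx R n \in unitmx /\ invmx (Vmx R n) = bidiag_mx R n /\
  exists s : 'S_n,
    forall i : 'I_n,
      row i (invmx (Vmx R n)) != 0 /\
      row i (invmx (Vmx R n)) *m ((perm_mx s)^T *m laplacian R E *m perm_mx s)
        = (n - i.+1)%N%:R *: row i (invmx (Vmx R n)).
Proof.
move=> Hcd.
have HBV : bidiag_mx R n *m Vmx R n = 1%:M.
  apply/matrixP => i j.
  have -> : (bidiag_mx R n *m Vmx R n) i j = (row i (bidiag_mx R n) *m Vmx R n) 0 j
    by rewrite -row_mul [RHS]mxE.
  apply: (@bidiag_case R n (Vmx R n) i j (fun x => x = (1%:M : 'M[R]_n) i j)) => [h|h]; rewrite !mxE /=.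
  - case: (ltngtP i j) => H.
    + have Hij : (i == j) = false by apply/eqP => e; rewrite e ltnn in H.
      by rewrite Hij subrr.
    + have Hij : (i == j) = false by apply/eqP => e; rewrite e ltnn in H.
      by rewrite Hij subrr.
    + have Hij : i = j by apply: val_inj.
      by rewrite Hij eqxx subr0.
  - case: (ltngtP i j) => H.
    + have := ltn_ord j; lia.
    + have Hij : (i == j) = false by apply/eqP => e; rewrite e ltnn in H.
      by rewrite Hij.
    + have Hij : i = j by apply: val_inj.
      by rewrite Hij eqxx.
have [_ HVu] := mulmx1_unit HBV.
have HinvV : invmx (Vmx R n) = bidiag_mx R n.
  by rewrite -[LHS]mul1mx -HBV -mulmxA mulmxV // mulmx1.
split => //; split => //.
rewrite HinvV.
have [[Hirr Htour] Hac] := Hcd.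
pose rk (v : 'I_n) := #|[set u | E u v]|.
have rk_lt v : (rk v < n)%N.
  rewrite /rk -[X in (_ < X)%N]card_ord -cardsT; apply: proper_card.
  rewrite properT; apply/eqP => Heq.
  have : v \in [set u | E u v] by rewrite Heq inE.
  by rewrite inE (negbTE (Hirr v)).
have rk_mono u v : E u v -> (rk u < rk v)%N.
  move=> Huv; apply: proper_card; apply/properP; split.
    apply/subsetP => x; rewrite !inE => Hxu; exact: cd_trans Hcd Hxu Huv.
  by exists u; rewrite !inE ?Huv ?(negbTE (Hirr u)).
have rkE u v : E u v = (rk u < rk v)%N.
  apply/idP/idP; first exact: rk_mono.
  move=> Hlt; case: (eqVneq u v) => [e|ne]; first by rewrite e ltnn in Hlt.
  move: (Htour _ _ ne) => /orP[/andP[-> _] // | /andP[Hvu _]].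
  by move: (rk_mono _ _ Hvu); rewrite ltnNge (ltnW Hlt).
have rk_inj : injective (fun v => Ordinal (rk_lt v)).
  move=> u v /(congr1 val) /= H.
  case: (eqVneq u v) => [//|ne].
  move: (Htour _ _ ne) => /orP[/andP[Huv _] | /andP[Hvu _]].
    by move: (rk_mono _ _ Huv); rewrite H ltnn.
  by move: (rk_mono _ _ Hvu); rewrite H ltnn.
pose s := perm rk_inj.
have HE (a b : 'I_n) : E ((s^-1)%g a) ((s^-1)%g b) = (a < b)%N.
  have Hr (x : 'I_n) : rk ((s^-1)%g x) = x.
    have := permKV s x; rewrite permE => /(congr1 val) /= ->; done.
  by rewrite rkE !Hr.
have Hdeg (a : 'I_n) : \sum_j (E ((s^-1)%g a) j)%:R = (n - a.+1)%N%:R :> R.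
  rewrite (reindex_inj (@perm_inj _ (s^-1)%g)) /=.
  under eq_bigr do rewrite HE.
  exact: sum_lt.
have HL (a b : 'I_n) : ((perm_mx s)^T *m laplacian R E *m perm_mx s) a b
    = (a == b)%:R * (n - a.+1)%N%:R - (a < b)%N%:R.
  rewrite tr_perm_mx -row_permE -[s in perm_mx s]invgK -col_permE.
  rewrite !mxE.
  under eq_bigr do rewrite mxE.
  by rewrite Hdeg (inj_eq perm_inj) HE mulr_natl.
exists s => i; split.
  apply/eqP => /matrixP /(_ 0 i); rewrite !mxE eqxx /=.
  rewrite (_ : (i.+1 == i :> nat) = false) ?subr0; last by apply/negbTE/eqP; lia.
  move=> /eqP.
  by rewrite oner_eq0.
apply/rowP => j.
rewrite [RHS]mxE [X in _ = _ * X]mxE [X in _ = _ * X]mxE.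

apply: (@bidiag_case R n _ i j (fun x => x = (n - i.+1)%N%:R * ((i == j :> nat)%:R - (i.+1 == j :> nat)%:R))) => [h|h]; rewrite !HL.
- rewrite (_ : (i == j) = (i == j :> nat)) // (_ : (Ordinal h == j) = (i.+1 == j :> nat)) //=.
  have Hs : (n - i.+1)%N = (n - i.+2).+1 by lia.
  rewrite Hs -addn1 natrD.
  case: (ltngtP i j) => H1; rewrite ?mulr1n ?mulr0n.
  + case: (ltngtP i.+1 j) => H2; rewrite ?mulr1n ?mulr0n /=; try lia; lra.
  + have H2 : (i.+1 == j :> nat) = false by apply/negbTE/eqP; lia.
    have H3 : (i.+1 < j)%N = false by apply/negbTE; lia.
    rewrite H2 H3 /=; lra.
  + have H2 : (i.+1 == j :> nat) = false by apply/negbTE/eqP; lia.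
    have H3 : (i.+1 < j)%N = false by apply/negbTE; lia.
    rewrite H2 H3 /=; lra.
- have Hs : (n - i.+1)%N = 0%N by lia.
  have H3 : (i < j)%N = false by apply/negbTE; have := ltn_ord j; lia.
  by rewrite Hs H3 !mul0r mulr0 subrr.
Qed.
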